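(* For any $\mathrm{LP}^{\mathrm{MLN}}$ program $\Pi$, the map \[ \phi(I)=I\cup\{\mathtt{sat}(i,w_i,\mathbf c) : w_i:\mathit{Head}_i(\mathbf c)\leftarrow\mathit{Body}_i(\mathbf c)\in Gr(\Pi),\ I\models \mathit{Body}_i(\mathbf c)\rightarrow \mathit{Head}_i(\mathbf c)\} \] is a one-to-one correspondence between $\mathrm{SM}[\Pi]$ and the set of stable models of $\mathsf{lpmln2asp^{rwd}}(\Pi)$. Furthermore, for every $I\in\mathrm{SM}[\Pi]$, \[ W_\Pi(I)=\exp\Big(\sum_{\mathtt{sat}(i,w_i,\mathbf c)\in\phi(I)} w_i\Big). \] Also, $\phi$ restricts to a one-to-one correspondence between the most probable stable models of $\Pi$ and the optimal stable models of $\mathsf{lpmln2asp^{rwd}}(\Pi)$.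
   Context: An $\mathrm{LP}^{\mathrm{MLN}}$ program is a finite set of weighted rules $w_i:\mathit{Head}_i(\mathbf x)\leftarrow \mathit{Body}_i(\mathbf x)$, indexed by $i$, where $\mathbf x$ is the list of global variables, $\mathit{Head}_i$ is a possibly empty disjunction of atoms, $\mathit{Body}_i$ a conjunction of literals, and $w_i$ is a real number or the symbol $\alpha$ (infinite weight). The Herbrand universe is finite; $Gr(\Pi)$ replaces global variables by all tuples $\mathbf c$ of the universe. For ground $\Pi$ and interpretation $I$: $\overline{\Pi}$ drops weights, $\Pi_I$ is the set of rules satisfied by $I$, $\mathrm{SM}[\Pi]=\{I: I \text{ stable model of }\overline{\Pi_I}\}$, $W_\Pi(I)=\exp(\sum_{w:R\in\Pi_I}w)$ if $I\in\mathrm{SM}[\Pi]$ and $0$ otherwise, $P_\Pi(I)=\lim_{\alpha\to\infty}W_\Pi(I)/\sum_{J\in\mathrm{SM}[\Pi]}W_\Pi(J)$; the most probable stable models are those $I$ maximizing $P_\Pi(I)$ (equivalently, lexicographically maximizing first the number of satisfied hard rules among $I\in\mathrm{SM}[\Pi]$, then the total weight of satisfied soft rules). Weak constraints: a weak constraint is $:\sim F\ [\mathit{Weight}@\mathit{Level}]$ with $F$ a conjunction of literals, $\mathit{Weight}$ real, $\mathit{Level}$ a nonnegative integer (optionally with a tuple of terms distinguishing instances). For $\Pi=\Pi_1\cup\Pi_2$ with $\Pi_1$ weak-constraint-free and $\Pi_2$ ground weak constraints, the stable models of $\Pi$ are those of $\Pi_1$; the penalty of a stable model $I$ at level $l$ is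 $\sum_{:\sim F[w@l]\in\Pi_2,\ I\models F} w$; $I$ is dominated by $I'$ if for some $l$ the penalty of $I'$ at level $l$ is smaller than that of $I$ and the penalties agree at all levels $k>l$; $I$ is optimal if it is not dominated by any stable model. $\mathsf{lpmln2asp^{rwd}}(\Pi)$ replaces each rule $w_i:\mathit{Head}_i(\mathbf x)\leftarrow\mathit{Body}_i(\mathbf x)$ by $\mathtt{sat}(i,w_i,\mathbf x)\leftarrow \mathit{Head}_i(\mathbf x)$; $\mathtt{sat}(i,w_i,\mathbf x)\leftarrow \mathtt{not}\ \mathit{Body}_i(\mathbf x)$; $\mathit{Head}_i(\mathbf x)\leftarrow \mathit{Body}_i(\mathbf x),\ \mathtt{not}\ \mathtt{not}\ \mathtt{sat}(i,w_i,\mathbf x)$; $:\sim \mathtt{sat}(i,w_i,\mathbf x).\ [-w'_i@l, i,\mathbf x]$, where $w'_i=1,\ l=1$ if $w_i=\alpha$, and $w'_i=w_i,\ l=0$ otherwise; $\mathtt{sat}$ is a fresh predicate. In the weight formula, hard weights are kept as the symbol $\alpha$. *)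

(* Defs.v *)
From Stdlib Require Import Reals.
From mathcomp Require Import all_boot.

Set Implicit Arguments.
Unset Strict Implicit.
Unset Printing Implicit Defensive.

Inductive form (X : Type) : Type :=
| FBot
| FAtom of X
| FAnd of form X & form X
| FOr of form X & form X
| FImp of form X & form X.
Arguments FBot {X}.

Definition FTop {X} : form X := FImp FBot FBot.
Definition FNot {X} (f : form X) : form X := FImp f FBot.

Fixpoint map_form (X Y : Type) (h : X -> Y) (f : form X) : form Y :=
  match f with
  | FBot => FBot
  | FAtom x => FAtom (h x)
  | FAnd f g => FAnd (map_form h f) (map_form h g)
  | FOr f g => FOr (map_form h f) (map_form h g)
  | FImp f g => FImp (map_form h f) (map_form h g)
  end.

Definition bigconj {X} (fs : seq (form X)) : form X := foldr (@FAnd X) FTop fs.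
Definition bigdisj {X} (fs : seq (form X)) : form X := foldr (@FOr X) FBot fs.

Section Semantics.
Variable X : finType.

Fixpoint fsat (I : {set X}) (f : form X) : bool :=
  match f with
  | FBot => false
  | FAtom x => x \in I
  | FAnd f g => fsat I f && fsat I g
  | FOr f g => fsat I f || fsat I g
  | FImp f g => fsat I f ==> fsat I g
  end.

(* Ferraris reduct F^I *)
Fixpoint reduct (I : {set X}) (f : form X) : form X :=
  if fsat I f then
    match f with
    | FBot => FBot
    | FAtom x => FAtom x
    | FAnd f g => FAnd (reduct I f) (reduct I g)
    | FOr f g => FOr (reduct I f) (reduct I g)
    | FImp f g => FImp (reduct I f) (reduct I g)
    end
  else FBot.

Definition psat (I : {set X}) (P : seq (form X)) : bool := all (fsat I) P.

Definition stable (P : seq (form X)) (I : {set X}) : bool :=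
  psat I (map (reduct I) P) &&
  [forall J : {set X}, (J \proper I) ==> ~~ psat J (map (reduct I) P)].

End Semantics.

Inductive weight : Type := Soft of R | Hard. (* Hard = alpha *)

Inductive lit (A : Type) : Type := Pos of A | Neg of A.

Definition lit_form (A : Type) (l : lit A) : form A :=
  match l with Pos a => FAtom a | Neg a => FNot (FAtom a) end.

(* A non-ground program: finitely many rules indexed by K; rule k has
   nv k global variables, weight wt k, and for each tuple c of elements
   of the Herbrand universe U its ground head Head_k(c) (a disjunction of
   ground atoms in A) and ground body Body_k(c) (a conjunction of literals). *)
Record lpmln (A U K : finType) := LPMLN {
  nv : K -> nat;
  wt : K -> weight;
  hd : forall k : K, (nv k).-tuple U -> seq A;
  bd : forall k : K, (nv k).-tuple U -> seq (lit A)
}.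

Section LPMLN.
Variables A U K : finType.
Variable Pi : lpmln A U K.

Definition inst_ty (k : K) : finType := ((nv Pi k).-tuple U : finType).

(* index set of Gr(Pi): pairs (i, c) *)
Definition ginst : finType := {k : K & inst_ty k}.

Definition gbody (g : ginst) : form A :=
  bigconj (map (@lit_form A) (bd (tagged g))).
Definition ghead (g : ginst) : form A :=
  bigdisj (map (@FAtom A) (hd (tagged g))).

Definition grule (g : ginst) : form A := FImp (gbody g) (ghead g).

(* SM[Pi]: I is a stable model of the unweighted (Pi_I)-bar *)
Definition SM (I : {set A}) : bool :=
  stable [seq grule g | g <- enum ginst & fsat I (grule g)] I.

Definition wval (alpha : R) (w : weight) : R :=
  match w with Soft r => r | Hard => alpha end.

(* W_Pi(I), as a function of the value alpha of the hard weight *)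
Definition W (alpha : R) (I : {set A}) : R :=
  if SM I then
    exp (\big[Rplus/R0]_(g : ginst | fsat I (grule g)) wval alpha (wt Pi (tag g)))
  else R0.

Definition lim_infty (f : R -> R) (l : R) : Prop :=
  forall eps : R, Rlt R0 eps ->
    exists M : R, forall a : R, Rlt M a -> Rlt (Rabs (Rminus (f a) l)) eps.

Definition isP (I : {set A}) (p : R) : Prop :=
  lim_infty (fun alpha => Rdiv (W alpha I) (\big[Rplus/R0]_(J : {set A} | SM J) W alpha J)) p.

Definition most_probable (I : {set A}) : Prop :=
  SM I /\ exists p, isP I p /\ forall (J : {set A}) (q : R), isP J q -> Rle q p.

End LPMLN.

(* a ground weak constraint  :~ F [w@l]  is (F, w, l); distinct list
   entries are distinct instances *)
Record asp (X : finType) := ASP {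
  rules : seq (form X);
  weak : seq (form X * R * nat)
}.

Section ASP.
Variable X : finType.
Variable P : asp X.

Definition asp_stable (I : {set X}) : bool := stable (rules P) I.

Definition penalty (I : {set X}) (l : nat) : R :=
  \big[Rplus/R0]_(c <- weak P | (c.2 == l) && fsat I c.1.1) c.1.2.

Definition dominated (I I' : {set X}) : Prop :=
  exists l : nat, Rlt (penalty I' l) (penalty I l) /\
    forall k : nat, (l < k)%N -> penalty I' k = penalty I k.

Definition optimal (I : {set X}) : Prop :=
  asp_stable I /\ ~ (exists I', asp_stable I' /\ dominated I I').

End ASP.

Section Translation.
Variables A U K : finType.
Variable Pi : lpmln A U K.

(* atoms of the translation: original atoms + fresh atoms sat(i,w_i,c) *)
Definition tatom : finType := (A + ginst Pi)%type.

Definition liftf (f : form A) : form tatom := map_form (@inl A (ginst Pi)) f.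
Definition satA (g : ginst Pi) : form tatom := FAtom (inr g).

Definition trans_rules_of (g : ginst Pi) : seq (form tatom) :=
  [:: FImp (liftf (ghead g)) (satA g);
      FImp (FNot (liftf (gbody g))) (satA g);
      FImp (FAnd (liftf (gbody g)) (FNot (FNot (satA g))))
           (liftf (ghead g)) ].

Definition trans_weak_of (g : ginst Pi) : form tatom * R * nat :=
  match wt Pi (tag g) with
  | Hard => (satA g, Ropp R1, 1%N)
  | Soft w => (satA g, Ropp w, 0%N)
  end.

Definition lpmln2asp : asp tatom :=
  ASP (flatten [seq trans_rules_of g | g <- enum (ginst Pi)])
      [seq trans_weak_of g | g <- enum (ginst Pi)].

Definition phi (I : {set A}) : {set tatom} :=
  ((@inl A (ginst Pi)) @: I) :|:
  ((@inr A (ginst Pi)) @: [set g | fsat I (grule g)]).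

End Translation.

(* Main.v *)
Require Import Defs.
From Stdlib Require Import Reals Lra.
From HB Require Import structures.
From mathcomp Require Import all_boot.
Set Implicit Arguments.
Unset Strict Implicit.
Unset Printing Implicit Defensive.
Lemma RplusA' : associative Rplus. Proof. by move=> *; rewrite Rplus_assoc. Qed.
Lemma RmultA' : associative Rmult. Proof. by move=> *; rewrite Rmult_assoc. Qed.
HB.instance Definition _ := Monoid.isComLaw.Build R R0 Rplus RplusA' Rplus_comm Rplus_0_l.
HB.instance Definition _ := Monoid.isComLaw.Build R R1 Rmult RmultA' Rmult_comm Rmult_1_l.
HB.instance Definition _ := Monoid.isMulLaw.Build R R0 Rmult Rmult_0_l Rmult_0_r.
HB.instance Definition _ := Monoid.isAddLaw.Build R Rmult Rplus Rmult_plus_distr_r Rmult_plus_distr_l.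

Lemma reduct_eq (X : finType) (I : {set X}) f :
  reduct I f = if fsat I f then
    match f with
    | FBot => FBot
    | FAtom x => FAtom x
    | FAnd f g => FAnd (reduct I f) (reduct I g)
    | FOr f g => FOr (reduct I f) (reduct I g)
    | FImp f g => FImp (reduct I f) (reduct I g)
    end else FBot.
Proof. by case: f. Qed.

Lemma fsat_reduct (X : finType) (I : {set X}) f : fsat I (reduct I f) = fsat I f.
Proof.
elim: f => [|x|f IHf g IHg|f IHf g IHg|f IHf g IHg] /=;
  try (case: ifP => //=); rewrite ?IHf ?IHg //.
Qed.

Lemma reduct_sub (X : finType) (I J : {set X}) f : fsat J (reduct I f) -> fsat I f.
Proof. by case: f => [|x|f g|f g|f g] /=; try case: ifP. Qed.

Lemma fsat_map (X Y : finType) (h : X -> Y) (J : {set Y}) f :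
  fsat J (map_form h f) = fsat [set x | h x \in J] f.
Proof. by elim: f => [|x|f IHf g IHg|f IHf g IHg|f IHf g IHg] //=; rewrite ?inE ?IHf ?IHg. Qed.

Lemma reduct_map (X Y : finType) (h : X -> Y) (I : {set Y}) f :
  reduct I (map_form h f) = map_form h (reduct [set x | h x \in I] f).
Proof.
elim: f => [|x|f IHf g IHg|f IHf g IHg|f IHf g IHg] /=;
 rewrite ?fsat_map ?inE; try (case: ifP => //=); rewrite ?IHf ?IHg //.
Qed.

Lemma all_flatten' (T : Type) (a : pred T) (ss : seq (seq T)) :
  all a (flatten ss) = all (all a) ss.
Proof. by elim: ss => //= s ss IH; rewrite all_cat IH. Qed.

Section Tr.
Variables (A U K : finType) (Pi : lpmln A U K).
Local Notation T := (tatom Pi).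
Local Notation pre J := [set x | @inl A (ginst Pi) x \in J].

Lemma rules3 (I' J' : {set T}) (B H : form A) (a : T) :
  all (fun f => fsat J' (reduct I' f))
    [:: FImp (liftf Pi H) (FAtom a); FImp (FNot (liftf Pi B)) (FAtom a);
        FImp (FAnd (liftf Pi B) (FNot (FNot (FAtom a)))) (liftf Pi H)]
  = [&& (fsat (pre I') H ==> (a \in I')),
        (fsat (pre J') (reduct (pre I') H) ==> (a \in I') && (a \in J')),
        (~~ fsat (pre I') B ==> (a \in I')),
        (~~ fsat (pre I') B ==> (a \in I') && (a \in J')),
        (fsat (pre I') B && (a \in I') ==> fsat (pre I') H) &
        ((a \in I') && fsat (pre J') (reduct (pre I') B) ==> fsat (pre J') (reduct (pre I') H))].
Proof.
move: (@reduct_sub _ (pre I') (pre J') B) (@reduct_sub _ (pre I') (pre J') H).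
rewrite /liftf /=; rewrite !fsat_map.
case: (fsat (pre I') B); case: (fsat (pre I') H); case: (a \in I') => /=;
rewrite ?(reduct_map, fsat_map);
case: (fsat (pre J') (reduct (pre I') B)); case: (fsat (pre J') (reduct (pre I') H));
case: (a \in J'); move=> H1 H2 //=; first [done | by have := H1 isT | by have := H2 isT | idtac].
Qed.

Definition phiJ (J : {set A}) (S : {set ginst Pi}) : {set T} :=
  ((@inl A (ginst Pi)) @: J) :|: ((@inr A (ginst Pi)) @: S).

Lemma inl_phiJ J S x : (inl x \in phiJ J S) = (x \in J).
Proof.
rewrite /phiJ inE mem_imset; last by move=> ? ? [].
by case: (x \in J) => //=; apply/imsetP => -[].
Qed.

Lemma inr_phiJ J S g : (inr g \in phiJ J S) = (g \in S).
Proof.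
rewrite /phiJ inE (@mem_imset _ _ inr); last by move=> ? ? [].
by case: (g \in S); rewrite ?orbT //= orbF; apply/imsetP => -[].
Qed.

Lemma pre_phiJ J S : pre (phiJ J S) = J.
Proof. by apply/setP => x; rewrite inE inl_phiJ. Qed.

Lemma phiE I : phi Pi I = phiJ I [set g : ginst Pi | fsat I (grule g)].
Proof. by []. Qed.

Lemma pre_phi I : pre (phi Pi I) = I.
Proof. by rewrite phiE pre_phiJ. Qed.

Lemma inr_phi I g : (inr g \in phi Pi I) = fsat I (grule g).
Proof. by rewrite phiE inr_phiJ inE. Qed.

Lemma tr_okE I' J' : psat J' (map (reduct I') (rules (lpmln2asp Pi))) =
  [forall g : ginst Pi, all (fun f => fsat J' (reduct I' f)) (trans_rules_of g)].
Proof.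
rewrite /psat /= all_map all_flatten' all_map.
apply/allP/forallP => [H g | H g _]; last exact: H.
by apply: H; rewrite mem_enum.
Qed.

Lemma sm_okE I J : psat J (map (reduct I) [seq grule g | g <- enum (ginst Pi) & fsat I (grule g)]) =
  [forall g : ginst Pi, fsat I (grule g) ==> fsat J (reduct I (grule g))].
Proof.
rewrite /psat all_map all_map all_filter.
apply/allP/forallP => [H g | H g _]; last exact: H.
by apply: H; rewrite mem_enum.
Qed.

Lemma red_grule I J (g : ginst Pi) : fsat J (reduct I (grule g)) =
  fsat I (grule g) && (fsat J (reduct I (gbody g)) ==> fsat J (reduct I (ghead g))).
Proof. by rewrite /grule /=; case: ifP. Qed.

Lemma tr_rules I' J' (g : ginst Pi) : all (fun f => fsat J' (reduct I' f)) (trans_rules_of g) =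
  [&& (fsat (pre I') (ghead g) ==> (inr g \in I')),
        (fsat (pre J') (reduct (pre I') (ghead g)) ==> (inr g \in I') && (inr g \in J')),
        (~~ fsat (pre I') (gbody g) ==> (inr g \in I')),
        (~~ fsat (pre I') (gbody g) ==> (inr g \in I') && (inr g \in J')),
        (fsat (pre I') (gbody g) && (inr g \in I') ==> fsat (pre I') (ghead g)) &
        ((inr g \in I') && fsat (pre J') (reduct (pre I') (gbody g)) ==> fsat (pre J') (reduct (pre I') (ghead g)))].
Proof. exact: rules3. Qed.

Lemma tr_self I' : psat I' (map (reduct I') (rules (lpmln2asp Pi))) ->
  phi Pi (pre I') = I'.
Proof.
rewrite tr_okE => /forallP H; apply/setP => -[x|g].
  by rewrite phiE inl_phiJ inE.
rewrite inr_phi; move: (H g); rewrite tr_rules !fsat_reduct /grule /=.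
by case: (inr g \in I'); case: (fsat _ (gbody g)); case: (fsat _ (ghead g)).
Qed.

Lemma tr_phi I J' : psat J' (map (reduct (phi Pi I)) (rules (lpmln2asp Pi))) =
  [forall g : ginst Pi, fsat I (grule g) ==>
     (fsat (pre J') (reduct I (gbody g)) ==> fsat (pre J') (reduct I (ghead g))) &&
     ((fsat (pre J') (reduct I (ghead g)) || ~~ fsat I (gbody g)) ==> (inr g \in J'))].
Proof.
rewrite tr_okE; apply: eq_forallb => g.
rewrite tr_rules pre_phi inr_phi /grule /=.
move: (@reduct_sub _ I (pre J') (gbody g)) (@reduct_sub _ I (pre J') (ghead g)).
case: (fsat (pre J') (reduct I (gbody g))); case: (fsat (pre J') (reduct I (ghead g)));
case: (fsat I (gbody g)); case: (fsat I (ghead g)); case: (inr g \in J');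
move=> H1 H2 //=; first [done | by have := H1 isT | by have := H2 isT | idtac].
Qed.

Lemma part1 I : SM Pi I -> asp_stable (lpmln2asp Pi) (phi Pi I).
Proof.
rewrite /SM /asp_stable /stable sm_okE => /andP[_ /forallP min]; apply/andP; split.
  rewrite tr_phi; apply/forallP => g; apply/implyP => sg.
  rewrite pre_phi !fsat_reduct inr_phi sg.
  by move: sg; rewrite /grule /=; case: (fsat I (gbody g)); case: (fsat I (ghead g)).
apply/forallP => J'; apply/implyP => pJ; apply/negP; rewrite tr_phi => /forallP trJ.
have subJ : pre J' \subset I.
  apply/subsetP => x; rewrite inE => xJ.
  by move/proper_sub/subsetP: pJ => /(_ _ xJ); rewrite phiE inl_phiJ.
have eqJ : pre J' = I.
  move: (min (pre J')); rewrite properE subJ /= sm_okE.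
  have -> : [forall g : ginst Pi, fsat I (grule g) ==> fsat (pre J') (reduct I (grule g))].
    apply/forallP => g; apply/implyP => sg; rewrite red_grule sg /=.
    by case/andP: (implyP (trJ g) sg).
  rewrite /= implybF negbK => sIJ; apply/eqP; by rewrite eqEsubset subJ sIJ.
move/proper_subn: pJ => /negP; apply; apply/subsetP => -[x|g].
  by rewrite phiE inl_phiJ -eqJ inE.
rewrite inr_phi => sg; case/andP: (implyP (trJ g) sg) => _ /implyP; apply.
rewrite eqJ fsat_reduct; move: sg; rewrite /grule /=.
by case: (fsat I (gbody g)); case: (fsat I (ghead g)).
Qed.

Lemma part2 I J : phi Pi I = phi Pi J -> I = J.
Proof. by move=> E; rewrite -(pre_phi I) E pre_phi. Qed.

Lemma part3 I' : asp_stable (lpmln2asp Pi) I' -> exists I, SM Pi I /\ phi Pi I = I'.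
Proof.
rewrite /asp_stable /stable => /andP[ok /forallP min].
have eq := tr_self ok; exists (pre I'); split => //.
rewrite /SM /stable sm_okE; apply/andP; split.
  by apply/forallP => g; apply/implyP => sg; rewrite red_grule sg /= !fsat_reduct; exact: sg.
apply/forallP => J; apply/implyP => pJ; apply/negP; rewrite sm_okE => /forallP smJ.
set S := [set g : ginst Pi | fsat (pre I') (grule g)].
move: (min (phiJ J S)); rewrite -{1 2}eq.
have -> : phiJ J S \proper phi Pi (pre I').
  rewrite phiE properE; apply/andP; split.
    apply/subsetP => -[x|g]; rewrite ?inl_phiJ ?inr_phiJ //.
    by move/proper_sub/subsetP: pJ; apply.
  apply/negP => /subsetP H; move/proper_subn/negP: pJ; apply; apply/subsetP => x xI.
  by move: (H (inl x)); rewrite !inl_phiJ; apply.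
rewrite /= tr_phi => /negP; apply; apply/forallP => g; apply/implyP => sg.
rewrite pre_phiJ inr_phiJ inE sg implybT andbT.
by move: (implyP (smJ g) sg); rewrite red_grule sg.
Qed.

End Tr.
From Stdlib Require Import Classical.
Local Open Scope R_scope.

Lemma lim_unique f a b : lim_infty f a -> lim_infty f b -> a = b.
Proof.
move=> Ha Hb.
have key : forall a b, lim_infty f a -> lim_infty f b -> ~ a < b.
  move=> a' b' Ha' Hb' lt.
  have e0 : 0 < (b' - a') / 2 by lra.
  case: (Ha' _ e0) => M1 H1; case: (Hb' _ e0) => M2 H2.
  have x1 : M1 < Rmax M1 M2 + 1 by move: (Rmax_l M1 M2); lra.
  have x2 : M2 < Rmax M1 M2 + 1 by move: (Rmax_r M1 M2); lra.
  case: (Rabs_def2 _ _ (H1 _ x1)) => ? ?; case: (Rabs_def2 _ _ (H2 _ x2)) => ? ?.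
  lra.
case: (Rtotal_order a b) => [lt|[//|gt]].
  by case: (key a b).
by case: (key b a).
Qed.

Lemma lim_scale f a c : lim_infty f a -> lim_infty (fun x => c * f x) (c * a).
Proof.
move=> Ha eps eps0.
have c1 : 0 < Rabs c + 1 by move: (Rabs_pos c); lra.
have e1 : 0 < eps / (Rabs c + 1) by apply: Rdiv_lt_0_compat.
case: (Ha _ e1) => M HM; exists M => x xM.
rewrite -Rmult_minus_distr_l Rabs_mult.
have h := HM _ xM.
have h0 := Rabs_pos (f x - a).
have hc := Rabs_pos c.
have : Rabs c * Rabs (f x - a) <= Rabs c * (eps / (Rabs c + 1)).
  by apply: Rmult_le_compat_l => //; lra.
have : Rabs c * (eps / (Rabs c + 1)) < eps.
  have -> : Rabs c * (eps / (Rabs c + 1)) = eps - eps / (Rabs c + 1) by field; lra.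
  lra.
lra.
Qed.

Lemma lim_le_exp f a C : 0 < C -> lim_infty f a ->
  (forall x, 0 <= x -> f x <= C * exp (- x)) -> a <= 0.
Proof.
move=> C0 Ha Hf; apply: Rnot_lt_le => a0.
have e0 : 0 < a / 2 by lra.
case: (Ha _ e0) => M HM.
have Ca : 0 < 2 * C / a by apply: Rdiv_lt_0_compat; lra.
have h4 : a * (2 * C / a) = 2 * C by field; lra.
set y := 2 * C / a in Ca h4 *.
set x := Rmax M 0 + y + 1.
have xM : M < x by move: (Rmax_l M 0); rewrite /x; lra.
have x0 : 0 < x by move: (Rmax_r M 0); rewrite /x; lra.
case: (Rabs_def2 _ _ (HM _ xM)) => _ h1.
have h2 := Hf x (Rlt_le _ _ x0).
have Ex := exp_ineq1 x (Rgt_not_eq _ _ x0).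
rewrite exp_Ropp in h2.
have Epos := exp_pos x.
have iE : / exp x * exp x = 1 by apply: Rinv_l; lra.
have iEp : 0 < / exp x by apply: Rinv_0_lt_compat.
have h3 : f x * exp x <= C by nra.
have : y < exp x by rewrite /x in Ex *; move: (Rmax_r M 0); lra.
nra.
Qed.

Lemma lim_mono f : (forall x y, x <= y -> f x <= f y) -> (forall x, f x <= 1) ->
  exists p, lim_infty f p /\ forall x, f x <= p.
Proof.
move=> mono bnd.
have bE : bound (fun y => exists x, y = f x) by exists 1 => y [x ->].
have nE : exists y, (fun y => exists x, y = f x) y by exists (f 0), 0.
case: (completeness _ bE nE) => m [ub lub].
exists m; split; last by move=> x; apply: ub; exists x.
move=> eps e0.
case: (classic (exists x, m - eps < f x)) => [[x0 h0]|nex].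
  exists x0 => x xx.
  have := mono _ _ (Rlt_le _ _ xx); have := ub (f x) (ex_intro _ x erefl).
  move=> h1 h2; apply: Rabs_def1; lra.
have : m <= m - eps.
  apply: lub => y [x ->]; apply: Rnot_lt_le => h; apply: nex; by exists x.
lra.
Qed.

Lemma lim_ext f g a : (forall x, f x = g x) -> lim_infty f a -> lim_infty g a.
Proof. move=> E H eps e0; case: (H _ e0) => M HM; exists M => x xM; rewrite -E; exact: HM. Qed.

Lemma exp_le x y : x <= y -> exp x <= exp y.
Proof. case/Rle_lt_or_eq_dec => [/exp_increasing/Rlt_le //|->]; exact: Rle_refl. Qed.

Lemma exists_max (T : finType) (P : pred T) (le : T -> T -> Prop) :
  (forall x y, le x y \/ le y x) -> (forall x y z, le x y -> le y z -> le x z) ->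
  (exists x, P x) -> exists m, P m /\ forall y, P y -> le y m.
Proof.
move=> tot tr [x0 Px0].
suff : forall s : seq T, (exists x, x \in s /\ P x) ->
    exists m, P m /\ forall y, y \in s -> P y -> le y m.
  case/(_ (enum T)); first by exists x0; rewrite mem_enum.
  by move=> m [Pm H]; exists m; split => // y; apply: H; rewrite mem_enum.
elim=> [[x []] //|x s IH [y [ys Py]]].
case: (classic (exists x, x \in s /\ P x)) => [ex|nex].
  case: (IH ex) => m [Pm Hm].
  case Px: (P x).
    case: (tot x m) => xm.
      exists m; split => // z; rewrite inE => /orP[/eqP->|zs] //; exact: Hm.
    exists x; split => // z; rewrite inE => /orP[/eqP->|zs] Pz.
      by case: (tot x x).
    exact: tr (Hm _ zs Pz) xm.
  exists m; split => // z; rewrite inE => /orP[/eqP->|zs]; last exact: Hm.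
  by rewrite Px.
have Px : P x.
  move: ys; rewrite inE => /orP[/eqP<-//|ys]; by case: nex; exists y.
exists x; split => // z; rewrite inE => /orP[/eqP->|zs] Pz.
  by case: (tot x x).
by case: nex; exists z.
Qed.

Section Anal.
Variables (A U K : finType) (Pi : lpmln A U K).

Definition hardv (w : weight) : R := if w is Hard then 1 else 0.
Definition softv (w : weight) : R := if w is Soft r then r else 0.
Definition isH (w : weight) : bool := if w is Hard then true else false.
Definition hn (I : {set A}) : nat :=
  (\sum_(g : ginst Pi | fsat I (grule g) && isH (wt Pi (tag g))) 1)%N.
Definition sv (I : {set A}) : R :=
  \big[Rplus/R0]_(g : ginst Pi | fsat I (grule g)) softv (wt Pi (tag g)).

Lemma hn_R I : INR (hn I) = \big[Rplus/R0]_(g : ginst Pi | fsat I (grule g)) hardv (wt Pi (tag g)).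
Proof.
rewrite /hn (big_morph INR plus_INR (erefl (INR 0))) big_mkcondr.
by apply: eq_bigr => g _; case: (wt Pi (tag g)).
Qed.

Lemma sum_wval I alpha :
  \big[Rplus/R0]_(g : ginst Pi | fsat I (grule g)) wval alpha (wt Pi (tag g)) =
  alpha * INR (hn I) + sv I.
Proof.
rewrite hn_R big_distrr -big_split; apply: eq_bigr => g _.
case: (wt Pi (tag g)) => [r|] /=; ring.
Qed.

Lemma W_eq alpha I : W Pi alpha I = if SM Pi I then exp (alpha * INR (hn I) + sv I) else 0.
Proof. by rewrite /W sum_wval. Qed.

Lemma pen_phi I l : penalty (lpmln2asp Pi) (phi Pi I) l =
  \big[Rplus/R0]_(g : ginst Pi | fsat I (grule g))
     (if (trans_weak_of g).2 == l then (trans_weak_of g).1.2 else 0).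
Proof.
rewrite /penalty /= big_map big_enum_cond big_mkcond [RHS]big_mkcond.
apply: eq_bigr => g _.
have -> : (trans_weak_of g).1.1 = satA g by rewrite /trans_weak_of; case: (wt Pi (tag g)).
have -> : fsat (phi Pi I) (satA g) = fsat I (grule g) by rewrite /= inr_phi.
rewrite /grule /=.
by case: (fsat I (gbody g)); case: (fsat I (ghead g)); case: ((trans_weak_of g).2 == l); rewrite ?andbT ?andbF.
Qed.

Lemma pen1 I : penalty (lpmln2asp Pi) (phi Pi I) 1 = - INR (hn I).
Proof.
rewrite pen_phi hn_R.
have -> : forall x, - x = -1 * x by move=> x; ring.
rewrite big_distrr; apply: eq_bigr => g _; rewrite /trans_weak_of.
case: (wt Pi (tag g)) => [r|] /=; ring.
Qed.

Lemma pen0 I : penalty (lpmln2asp Pi) (phi Pi I) 0 = - sv I.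
Proof.
rewrite pen_phi /sv.
have -> : forall x, - x = -1 * x by move=> x; ring.
rewrite big_distrr; apply: eq_bigr => g _; rewrite /trans_weak_of.
case: (wt Pi (tag g)) => [r|] /=; ring.
Qed.

Lemma penS I k : (1 < k)%N -> penalty (lpmln2asp Pi) (phi Pi I) k = 0.
Proof.
move=> k1; rewrite pen_phi big1 // => g _; rewrite /trans_weak_of.
case: (wt Pi (tag g)) => [r|] /=.
  by case: k k1.
by case: k k1 => // -[].
Qed.

Definition beats (J I : {set A}) : Prop :=
  (hn I < hn J)%N \/ (hn I = hn J /\ sv I < sv J).
Definition lexle (J I : {set A}) : Prop :=
  (hn J < hn I)%N \/ (hn J = hn I /\ sv J <= sv I).

Lemma dom_beats I J : dominated (lpmln2asp Pi) (phi Pi I) (phi Pi J) -> beats J I.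
Proof.
case=> l [lt eq].
case: l lt eq => [|[|l]] lt eq.
- rewrite !pen0 in lt; move: (eq 1%N isT); rewrite !pen1 => e.
  right; split; last lra.
  by apply: INR_eq; lra.
- rewrite !pen1 in lt; left; apply/ltP; apply: INR_lt; lra.
- by rewrite !penS in lt; [lra| |].
Qed.

Lemma beats_dom I J : beats J I -> dominated (lpmln2asp Pi) (phi Pi I) (phi Pi J).
Proof.
case=> [lt|[e lt]].
  exists 1%N; rewrite !pen1; split.
    have := lt_INR _ _ (elimT ltP lt); lra.
  by move=> k k1; rewrite !penS.
exists 0%N; rewrite !pen0; split; first lra.
case=> // -[_|k _]; first by rewrite !pen1 e.
by rewrite !penS.
Qed.

Lemma not_lexle J I : ~ lexle J I -> beats J I.
Proof.
rewrite /lexle /beats => H.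
case: (ltngtP (hn J) (hn I)) => [lt|gt|e].
- by case: H; left.
- by left.
- right; split => //; case: (Rle_lt_dec (sv J) (sv I)) => // le.
  by case: H; right.
Qed.

Lemma lexle_nbeats J I : lexle J I -> ~ beats J I.
Proof.
rewrite /lexle /beats => [[lt|[e le]]] [lt'|[e' lt']].
- by move: (ltn_trans lt lt'); rewrite ltnn.
- by move: lt; rewrite e' ltnn.
- by move: lt'; rewrite e ltnn.
- lra.
Qed.

Lemma lexmax_exists : (exists I, SM Pi I) ->
  exists M, SM Pi M /\ forall J, SM Pi J -> lexle J M.
Proof.
apply: exists_max.
- move=> x y; rewrite /lexle; case: (ltngtP (hn x) (hn y)) => [lt|gt|e].
  + by left; left.
  + by right; left.
  + case: (Rle_dec (sv x) (sv y)) => le; [left|right]; right; split => //; lra.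
- move=> x y z; rewrite /lexle => [[lt|[e le]]] [lt'|[e' le']].
  + by left; apply: ltn_trans lt lt'.
  + by left; rewrite -e'.
  + by left; rewrite e.
  + right; split; [by rewrite e e' | lra].
Qed.

Definition Z (alpha : R) : R := \big[Rplus/R0]_(J : {set A} | SM Pi J) W Pi alpha J.
Definition F (J : {set A}) (alpha : R) : R := Rdiv (W Pi alpha J) (Z alpha).

Lemma W_ge0 alpha J : 0 <= W Pi alpha J.
Proof. rewrite W_eq; case: (SM Pi J); [exact: Rlt_le (exp_pos _) | exact: Rle_refl]. Qed.

Lemma W_pos alpha J : SM Pi J -> 0 < W Pi alpha J.
Proof. by rewrite W_eq => ->; apply: exp_pos. Qed.

Lemma Z_ge alpha J : SM Pi J -> W Pi alpha J <= Z alpha.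
Proof.
move=> sJ; rewrite /Z (bigD1 J) //=.
rewrite -{1}(Rplus_0_r (W Pi alpha J)); apply: Rplus_le_compat_l.
apply: (big_ind (fun x => 0 <= x)); [exact: Rle_refl | move=> *; lra | move=> *; exact: W_ge0].
Qed.

Variable M : {set A}.
Hypothesis SMM : SM Pi M.
Hypothesis Mmax : forall J, SM Pi J -> lexle J M.

Lemma Z_pos alpha : 0 < Z alpha.
Proof. have := Z_ge alpha SMM; have := W_pos alpha SMM; lra. Qed.

Definition dd (J : {set A}) (alpha : R) : R :=
  exp (alpha * (INR (hn J) - INR (hn M)) + (sv J - sv M)).

Lemma W_rel alpha J : SM Pi J -> W Pi alpha J = dd J alpha * W Pi alpha M.
Proof.
move=> sJ; rewrite !W_eq sJ SMM /dd -exp_plus; congr exp; ring.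
Qed.

Lemma F_rel alpha J : SM Pi J -> F J alpha = dd J alpha * F M alpha.
Proof. by move=> sJ; rewrite /F W_rel // /Rdiv Rmult_assoc. Qed.

Lemma hle J : SM Pi J -> INR (hn J) <= INR (hn M).
Proof.
case/Mmax => [lt|[-> _]]; last exact: Rle_refl.
exact: Rlt_le (lt_INR _ _ (elimT ltP lt)).
Qed.

Lemma dd_anti J a b : SM Pi J -> a <= b -> dd J b <= dd J a.
Proof.
move=> sJ ab; apply: exp_le; have := hle sJ => hJ; nra.
Qed.

Lemma FM_mono a b : a <= b -> F M a <= F M b.
Proof.
move=> ab.
have key : Z b * W Pi a M <= Z a * W Pi b M.
  rewrite /Z !big_distrl; apply: (big_ind2 (fun x y => x <= y)).
  - exact: Rle_refl.
  - by move=> ? ? ? ? /= ? ?; lra.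
  - move=> J sJ /=; rewrite !(W_rel _ sJ).
    rewrite (Rmult_assoc (dd J b)) (Rmult_comm (W Pi b M)) -Rmult_assoc.
    apply: Rmult_le_compat_r; first by have := W_pos b SMM; lra.
    apply: Rmult_le_compat_r; first by have := W_pos a SMM; lra.
    exact: (dd_anti sJ ab).
have Za := Z_pos a; have Zb := Z_pos b.
have ea : F M a * Z a = W Pi a M by rewrite /F /Rdiv Rmult_assoc Rinv_l ?Rmult_1_r //; lra.
have eb : F M b * Z b = W Pi b M by rewrite /F /Rdiv Rmult_assoc Rinv_l ?Rmult_1_r //; lra.
rewrite -ea -eb in key.
apply: (Rmult_le_reg_r (Z a * Z b)); first exact: Rmult_lt_0_compat.
lra.
Qed.

Lemma FM_le1 a : F M a <= 1.
Proof.
have Za := Z_pos a; have := Z_ge a SMM.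
have ea : F M a * Z a = W Pi a M by rewrite /F /Rdiv Rmult_assoc Rinv_l ?Rmult_1_r //; lra.
rewrite -ea; nra.
Qed.

Lemma FM_pos a : 0 < F M a.
Proof. apply: Rdiv_lt_0_compat; [exact: W_pos | exact: Z_pos]. Qed.

Lemma FM_lim : exists pM, isP Pi M pM /\ 0 < pM.
Proof.
case: (lim_mono FM_mono FM_le1) => p [lp ub].
exists p; split; first exact: lp.
have := ub 0; have := FM_pos 0; lra.
Qed.

Lemma q_bound J q pM : isP Pi M pM -> 0 < pM -> isP Pi J q ->
  q <= pM /\ (SM Pi J -> beats M J -> q < pM).
Proof.
move=> lM p0 lJ.
case sJ: (SM Pi J); last first.
  have : lim_infty (fun alpha => F J alpha) 0.
    apply: (@lim_ext (fun _ => 0)); last by move=> e e0; exists 0 => x _; rewrite Rminus_0_r Rabs_R0.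
    by move=> x; rewrite /F W_eq sJ /Rdiv Rmult_0_l.
  move/(lim_unique lJ) => ->; split => //; lra.
case: (Mmax sJ) => [lt|[e le]].
  have : q <= 0.
    apply: (lim_le_exp (C := exp (sv J - sv M))) lJ _; first exact: exp_pos.
    move=> x x0; rewrite -/(F J x) (F_rel _ sJ) -exp_plus.
    have h1 : INR (hn J) + 1 <= INR (hn M) by rewrite -S_INR; apply: le_INR; apply/leP.
    have h2 : dd J x <= exp (sv J - sv M + - x) by apply: exp_le; nra.
    have := FM_le1 x; have := FM_pos x; have := exp_pos (x * (INR (hn J) - INR (hn M)) + (sv J - sv M)).
    rewrite -/(dd J x) => *; nra.
  move=> q0; split => [|_ _]; lra.
have lJ' : lim_infty (fun alpha => exp (sv J - sv M) * F M alpha) q.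
  apply: lim_ext lJ => x; rewrite -/(F J x) (F_rel _ sJ) /dd e; congr (exp _ * _); ring.
have := lim_unique lJ' (lim_scale (exp (sv J - sv M)) lM) => ->.
have ex1 : exp (sv J - sv M) <= 1 by rewrite -exp_0; apply: exp_le; lra.
split; first nra.
move=> _ [lt|[_ lt]]; first by move: lt; rewrite e ltnn.
have : exp (sv J - sv M) < 1 by rewrite -exp_0; apply: exp_increasing; lra.
nra.
Qed.

End Anal.

Lemma part5 (A U K : finType) (Pi : lpmln A U K) (I : {set A}) :
  most_probable Pi I -> optimal (lpmln2asp Pi) (phi Pi I).
Proof.
case=> sI [p [lp pmax]]; split; first exact: part1.
case=> I' [stI' dom].
case: (part3 stI') => J [sJ eJ]; rewrite -eJ in dom.
have bJI := dom_beats dom.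
case: (lexmax_exists (ex_intro _ I sI)) => M [sM Mmax].
case: (FM_lim sM Mmax) => pM [lM pM0].
have bMI : beats Pi M I.
  move: bJI (Mmax J sJ); rewrite /beats /lexle.
  case=> [lt|[e lt]] [lt'|[e' le']].
  - by left; apply: ltn_trans lt lt'.
  - by left; rewrite -e'.
  - by left; rewrite e.
  - right; split; [by rewrite e e' | lra].
have [_ lt] := q_bound sM Mmax lM pM0 lp.
have := lt sI bMI; have := pmax M pM lM; lra.
Qed.

Lemma part6 (A U K : finType) (Pi : lpmln A U K) (I' : {set tatom Pi}) :
  optimal (lpmln2asp Pi) I' -> exists I, most_probable Pi I /\ phi Pi I = I'.
Proof.
case=> stI' nodom; case: (part3 stI') => I [sI eI]; exists I; split => //.
have Imax : forall J, SM Pi J -> lexle Pi J I.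
  move=> J sJ; apply: NNPP => nle; apply: nodom; exists (phi Pi J); split.
    exact: part1.
  rewrite -eI; exact: beats_dom (not_lexle nle).
case: (FM_lim sI Imax) => p [lp p0].
split => //; exists p; split => // J q lq.
by case: (q_bound sI Imax lp p0 lq).
Qed.

Close Scope R_scope.

Theorem theorem2 (A U K : finType) (Pi : lpmln A U K) :
  (* phi maps SM[Pi] into the stable models of lpmln2asp^rwd(Pi) *)
  (forall I : {set A}, SM Pi I -> asp_stable (lpmln2asp Pi) (phi Pi I)) /\
  (* phi is injective on SM[Pi] *)
  (forall I J : {set A}, SM Pi I -> SM Pi J -> phi Pi I = phi Pi J -> I = J) /\
  (* phi is onto the stable models of lpmln2asp^rwd(Pi) *)
  (forall I' : {set tatom Pi}, asp_stable (lpmln2asp Pi) I' ->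
     exists I : {set A}, SM Pi I /\ phi Pi I = I') /\
  (* weight formula (hard weights kept as the symbol alpha) *)
  (forall I : {set A}, SM Pi I -> forall alpha : R,
     W Pi alpha I =
     exp (\big[Rplus/R0]_(g : ginst Pi | inr g \in phi Pi I) wval alpha (wt Pi (tag g)))) /\
  (* phi restricts to a correspondence most probable <-> optimal *)
  (forall I : {set A}, most_probable Pi I -> optimal (lpmln2asp Pi) (phi Pi I)) /\
  (forall I' : {set tatom Pi}, optimal (lpmln2asp Pi) I' ->
     exists I : {set A}, most_probable Pi I /\ phi Pi I = I').
Proof.
split; first exact: part1.
split; first by move=> I J _ _; apply: part2.
split; first exact: part3.
split.
  move=> I sI alpha; rewrite /W sI; congr exp; apply: eq_bigl => g; by rewrite inr_phi.
split; first exact: part5.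
exact: part6.
Qed.
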